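(* Let $\mathcal{U}\subset\mathbb{R}^m$ be a nonempty closed convex set, let $\xi_1:\mathbb{R}^m\to\mathbb{R}$ be convex and differentiable with $\nabla\xi_1$ Lipschitz continuous with constant $L>0$, and let $\xi_2$ be a proper closed convex function that is strongly convex with constant $\mu>0$. Let $\xi=\xi_1+\xi_2$ and consider $\min_{{\bf u}\in\mathcal{U}}\xi({\bf u})$. Let ${\bf u}^0\in\mathcal{U}\cap\mathrm{dom}(\xi_2)$, ${\bf u}^{-1}={\bf u}^0$, $L_0\in(0,L]$, and for $k\ge1$ generate ${\bf u}^k$ as follows: choose $L_k\in(0,L]$ and $\omega_{k-1}$ with $0\le\omega_{k-1}\le\sqrt{L_{k-1}/L_k}$, set $\hat{\bf u}^{k-1}={\bf u}^{k-1}+\omega_{k-1}({\bf u}^{k-1}-{\bf u}^{k-2})$, and $${\bf u}^k=\arg\min_{{\bf u}\in\mathcal{U}}\ \xi_1(\hat{\bf u}^{k-1})+\langle\nabla\xi_1(\hat{\bf u}^{k-1}),{\bf u}-\hat{\bf u}^{k-1}\rangle+\tfrac{L_k}{2}\|{\bf u}-\hat{\bf u}^{k-1}\|^2+\xi_2({\bf u});$$ if $\xi({\bf u}^k)>\xi({\bf u}^{k-1})$, recompute ${\bf u}^k$ by the same formula with $\hat{\bf u}^{k-1}$ replaced by ${\bf u}^{k-1}$ (i.e. $\omega_{k-1}=0$). Assume that for every $k\ge1$ the final ${\bf u}^k$ and the extrapolated point $\hat{\bf u}^{k-1}$ actually used satisfy $$\xi_1({\bf u}^k)\le\xi_1(\hat{\bf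 u}^{k-1})+\langle\nabla\xi_1(\hat{\bf u}^{k-1}),{\bf u}^k-\hat{\bf u}^{k-1}\rangle+\tfrac{L_k}{2}\|{\bf u}^k-\hat{\bf u}^{k-1}\|^2 .$$ Then $\{{\bf u}^k\}$ converges R-linearly to the unique minimizer ${\bf u}^*$ of $\xi$ over $\mathcal{U}$: there exist constants $C>0$ and $0<\tau<1$ such that $\|{\bf u}^k-{\bf u}^*\|\le C\tau^k$ for all $k\ge0$.
   Context: Strong convexity of $\xi_2$ with constant $\mu>0$ means $\xi_2({\bf u})-\xi_2({\bf v})\ge\langle{\bf g}_{\bf v},{\bf u}-{\bf v}\rangle+\frac{\mu}{2}\|{\bf u}-{\bf v}\|^2$ for all ${\bf g}_{\bf v}\in\partial\xi_2({\bf v})$ and ${\bf u},{\bf v}\in\mathrm{dom}(\xi_2)$. *)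

(* Defs.v *)
From Stdlib Require Import Reals.
From mathcomp Require Import ssreflect ssrfun ssrbool eqtype ssrnat seq fintype bigop.
Set Implicit Arguments.
Unset Strict Implicit.
Unset Printing Implicit Defensive.
Open Scope R_scope.

Definition vec (m : nat) := 'I_m -> R.

Definition vadd m (x y : vec m) : vec m := fun i => x i + y i.
Definition vsub m (x y : vec m) : vec m := fun i => x i - y i.
Definition vscale m (a : R) (x : vec m) : vec m := fun i => a * x i.
Definition inner m (x y : vec m) : R := \big[Rplus/0]_(i < m) (x i * y i).
Definition vnorm m (x : vec m) : R := sqrt (inner x x).

Definition vconv m (xs : nat -> vec m) (a : vec m) : Prop :=
  forall eps, 0 < eps -> exists N, forall n, (N <= n)%coq_nat -> vnorm (vsub (xs n) a) < eps.

Definition vnonempty m (U : vec m -> Prop) := exists x, U x.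
Definition vclosed_set m (U : vec m -> Prop) :=
  forall xs a, (forall n, U (xs n)) -> vconv xs a -> U a.
Definition vconvex_set m (U : vec m -> Prop) :=
  forall x y t, U x -> U y -> 0 <= t <= 1 ->
    U (vadd (vscale t x) (vscale (1 - t) y)).

Definition convex_fun m (f : vec m -> R) :=
  forall x y t, 0 <= t <= 1 ->
    f (vadd (vscale t x) (vscale (1 - t) y)) <= t * f x + (1 - t) * f y.
Definition is_gradient m (f : vec m -> R) (g : vec m -> vec m) :=
  forall x eps, 0 < eps -> exists delta, 0 < delta /\
    forall h, vnorm h < delta ->
      Rabs (f (vadd x h) - f x - inner (g x) h) <= eps * vnorm h.
Definition lipschitz m (g : vec m -> vec m) (L : R) :=
  forall x y, vnorm (vsub (g x) (g y)) <= L * vnorm (vsub x y).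

(* extended reals R u {+oo}: None = +oo *)
Definition ER := option R.
Definition ERle (a b : ER) : Prop :=
  match a, b with
  | _, None => True
  | None, Some _ => False
  | Some x, Some y => x <= y
  end.
Definition ERlt (a b : ER) : Prop := ~ ERle b a.
Definition ERaddR (r : R) (a : ER) : ER :=
  match a with Some x => Some (r + x) | None => None end.

Definition dom m (f : vec m -> ER) (x : vec m) : Prop := f x <> None.

Definition proper_fun m (f : vec m -> ER) := exists x, dom f x.
(* closed = epigraph closed *)
Definition closed_fun m (f : vec m -> ER) :=
  forall (xs : nat -> vec m) (rs : nat -> R) x r,
    (forall n, ERle (f (xs n)) (Some (rs n))) -> vconv xs x -> Un_cv rs r ->
    ERle (f x) (Some r).
Definition convex_efun m (f : vec m -> ER) :=
  forall x y t, dom f x -> dom f y -> 0 <= t <= 1 ->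
    exists fx fy, f x = Some fx /\ f y = Some fy /\
      ERle (f (vadd (vscale t x) (vscale (1 - t) y))) (Some (t * fx + (1 - t) * fy)).

Definition subgrad m (f : vec m -> ER) (v g : vec m) :=
  exists fv, f v = Some fv /\
    forall u, ERle (Some (fv + inner g (vsub u v))) (f u).

Definition strongly_convex m (f : vec m -> ER) (mu : R) :=
  forall u v g fu fv, f u = Some fu -> f v = Some fv -> subgrad f v g ->
    fu - fv >= inner g (vsub u v) + mu / 2 * (vnorm (vsub u v)) ^ 2.

Definition is_min_over m (U : vec m -> Prop) (f : vec m -> ER) (x : vec m) :=
  U x /\ forall z, U z -> ERle (f x) (f z).

Definition xi_sum m (xi1 : vec m -> R) (xi2 : vec m -> ER) : vec m -> ER :=
  fun u => ERaddR (xi1 u) (xi2 u).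

Definition model m (xi1 : vec m -> R) (g1 : vec m -> vec m) (xi2 : vec m -> ER)
    (y : vec m) (Lk : R) : vec m -> ER :=
  fun u => ERaddR (xi1 y + inner (g1 y) (vsub u y) + Lk / 2 * (vnorm (vsub u y)) ^ 2)
                  (xi2 u).

Definition descent m (xi1 : vec m -> R) (g1 : vec m -> vec m) (y uk : vec m) (Lk : R) :=
  xi1 uk <= xi1 y + inner (g1 y) (vsub uk y) + Lk / 2 * (vnorm (vsub uk y)) ^ 2.

(* Main.v *)
Require Import Defs.
From HB Require Import structures.
From Stdlib Require Import Reals Lra Psatz ClassicalEpsilon FunctionalExtensionality Classical.
From mathcomp Require Import ssreflect ssrfun ssrbool eqtype ssrnat seq fintype bigop.
Open Scope R_scope.
HB.instance Definition _ := Monoid.isComLaw.Build R 0 Rplus (fun a b c => esym (Rplus_assoc a b c)) Rplus_comm Rplus_0_l.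

Section Sums.
Context {m : nat}.
Implicit Types F G : 'I_m -> R.
Lemma sumR_add F G :
  \big[Rplus/0]_(i < m) (F i + G i) = \big[Rplus/0]_(i < m) F i + \big[Rplus/0]_(i < m) G i.
Proof. by rewrite big_split. Qed.
Lemma sumR_scale c F :
  \big[Rplus/0]_(i < m) (c * F i) = c * \big[Rplus/0]_(i < m) F i.
Proof.
apply: (big_rec2 (fun x y => x = c * y)); first lra.
by move=> i x y _ ->; lra.
Qed.
Lemma sumR_div c F :
  \big[Rplus/0]_(i < m) (F i / c) = \big[Rplus/0]_(i < m) F i / c.
Proof.
apply: (big_rec2 (fun x y => x = y / c)); first (rewrite /Rdiv; ring).
by move=> i x y _ ->; rewrite /Rdiv; ring.
Qed.
Lemma sumR_opp F :
  \big[Rplus/0]_(i < m) (- F i) = - \big[Rplus/0]_(i < m) F i.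
Proof.
apply: (big_rec2 (fun x y => x = - y)); first lra.
by move=> i x y _ ->; lra.
Qed.
Lemma sumR_sub F G :
  \big[Rplus/0]_(i < m) (F i - G i) = \big[Rplus/0]_(i < m) F i - \big[Rplus/0]_(i < m) G i.
Proof. by rewrite /Rminus sumR_add sumR_opp. Qed.
Lemma sumR_ext F G : (forall i, F i = G i) ->
  \big[Rplus/0]_(i < m) F i = \big[Rplus/0]_(i < m) G i.
Proof. move=> H; apply: eq_bigr => i _; apply H. Qed.
Lemma sumR_le F G : (forall i, F i <= G i) ->
  \big[Rplus/0]_(i < m) F i <= \big[Rplus/0]_(i < m) G i.
Proof.
move=> H; apply: (big_ind2 (fun x y => x <= y)) => //; first lra.
move=> ????; lra.
Qed.
Lemma sumR_ge0 F : (forall i, 0 <= F i) -> 0 <= \big[Rplus/0]_(i < m) F i.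
Proof. by move=> H; apply: (big_ind (fun x => 0 <= x)) => //; [lra | move=> x y; lra]. Qed.
Lemma sumR_term F j : (forall i, 0 <= F i) ->
  F j <= \big[Rplus/0]_(i < m) F i.
Proof.
move=> H; rewrite (bigD1 j) //=.
rewrite -[X in X <= _]Rplus_0_r; apply Rplus_le_compat_l.
by apply: (big_ind (fun x => 0 <= x)) => //; [lra | move=> x y; lra].
Qed.
End Sums.

Ltac sumify := rewrite /inner; repeat (rewrite -sumR_scale || rewrite -sumR_div || rewrite -sumR_opp || rewrite -sumR_add || rewrite -sumR_sub).
Ltac fld := field; repeat split; try ((apply Rgt_not_eq; lra) || (apply Rlt_not_eq; lra) || lra).
Ltac vring := sumify; apply sumR_ext => i; rewrite /vadd /vsub /vscale; (ring || fld).
Section Vec.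
Context {m : nat}.
Implicit Types x y z : vec m.

Lemma inner_ge0 x : 0 <= inner x x.
Proof. apply sumR_ge0 => i; nra. Qed.
Lemma vnorm_ge0 x : 0 <= vnorm x.
Proof. apply sqrt_pos. Qed.
Lemma vnorm_sq x : vnorm x ^ 2 = inner x x.
Proof. rewrite /vnorm /= Rmult_1_r sqrt_sqrt //; apply inner_ge0. Qed.
Lemma inner_sym x y : inner x y = inner y x.
Proof. apply sumR_ext => i; ring. Qed.

Lemma coord_le x i : Rabs (x i) <= vnorm x.
Proof.
rewrite /vnorm -sqrt_Rsqr_abs; apply sqrt_le_1_alt.
rewrite /Rsqr; apply: (@sumR_term _ (fun i => x i * x i)) => j; nra.
Qed.

Lemma vnorm_scale c x : vnorm (vscale c x) = Rabs c * vnorm x.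
Proof.
rewrite /vnorm.
have -> : inner (vscale c x) (vscale c x) = Rsqr c * inner x x.
  rewrite /Rsqr; vring.
rewrite sqrt_mult; [|apply Rle_0_sqr|apply inner_ge0].
by rewrite sqrt_Rsqr_abs.
Qed.

Lemma inner_quad x y s :
  inner (vsub x (vscale s y)) (vsub x (vscale s y)) = inner x x - 2 * s * inner x y + s ^ 2 * inner y y.
Proof. rewrite (inner_sym x y). vring. Qed.

Lemma cauchy_schwarz x y : Rabs (inner x y) <= vnorm x * vnorm y.
Proof.
have Q : forall s, 0 <= inner x x - 2 * s * inner x y + s ^ 2 * inner y y.
  move=> s; rewrite -inner_quad; apply inner_ge0.
have Hx := inner_ge0 x; have Hy := inner_ge0 y.
have H2 : (inner x y) ^ 2 <= inner x x * inner y y.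
  case: (Req_dec (inner y y) 0) => Hy0.
  - case: (Req_dec (inner x y) 0) => Hxy0; first (rewrite Hxy0 Hy0; nra).
    have := Q ((inner x x + 1) / (2 * inner x y)).
    have e : 2 * ((inner x x + 1) / (2 * inner x y)) * inner x y = inner x x + 1 by field.
    rewrite Hy0 e; lra.
  - have := Q (inner x y / inner y y).
    move=> H. have Hp : 0 < inner y y by lra.
    have : 0 <= (inner x x - 2 * (inner x y / inner y y) * inner x y +
       (inner x y / inner y y) ^ 2 * inner y y) * inner y y by nra.
    have -> : (inner x x - 2 * (inner x y / inner y y) * inner x y +
       (inner x y / inner y y) ^ 2 * inner y y) * inner y y =
       inner x x * inner y y - inner x y ^ 2 by field.
    lra.
rewrite /vnorm -sqrt_mult // -sqrt_Rsqr_abs; apply sqrt_le_1_alt.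
rewrite /Rsqr; nra.
Qed.

Lemma vnorm_triangle x y : vnorm (vadd x y) <= vnorm x + vnorm y.
Proof.
have h1 : vnorm (vadd x y) ^ 2 = vnorm x ^ 2 + 2 * inner x y + vnorm y ^ 2.
  rewrite !vnorm_sq; vring.
have := cauchy_schwarz x y; have := Rle_abs (inner x y).
have := vnorm_ge0 x; have := vnorm_ge0 y; have := vnorm_ge0 (vadd x y).
nra.
Qed.

Lemma vsub_split x y z : vsub x z = vadd (vsub x y) (vsub y z).
Proof. apply functional_extensionality => i; rewrite /vsub /vadd; ring. Qed.

Lemma vnorm_tri3 x y z : vnorm (vsub x z) <= vnorm (vsub x y) + vnorm (vsub y z).
Proof. rewrite (vsub_split x y z); apply vnorm_triangle. Qed.

Lemma vnorm_sym x y : vnorm (vsub x y) = vnorm (vsub y x).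
Proof.
have -> : vsub x y = vscale (-1) (vsub y x).
  apply functional_extensionality => i; rewrite /vsub /vscale; ring.
rewrite vnorm_scale Rabs_Ropp Rabs_R1; ring.
Qed.

Lemma vnorm_eq0 x y : vnorm (vsub x y) = 0 -> x = y.
Proof.
move=> H; apply functional_extensionality => i.
have := coord_le (vsub x y) i; rewrite H /vsub => h.
have := Rabs_pos (x i - y i). move=> h2.
have h3 : Rabs (x i - y i) = 0 by lra.
case: (Rcase_abs (x i - y i)) h3 => hh; [rewrite Rabs_left|rewrite Rabs_right]; lra.
Qed.

Lemma inner_le_eps x y e : 0 < e -> 2 * inner x y <= e * inner x x + inner y y / e.
Proof.
move=> He.
have := inner_ge0 (vsub (vscale e x) y).
have -> : inner (vsub (vscale e x) y) (vsub (vscale e x) y) = e ^ 2 * inner x x - 2 * e * inner x y + inner y y.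
  vring.
move=> h.
have : 2 * inner x y * e <= (e * inner x x + inner y y / e) * e.
  have -> : (e * inner x x + inner y y / e) * e = e ^ 2 * inner x x + inner y y by field; lra.
  lra.
move=> h2; apply (Rmult_le_reg_r e) => //.
Qed.
End Vec.

Lemma cv_const c : Un_cv (fun _ => c) c.
Proof. move=> e He; exists 0%nat => n _; rewrite /R_dist Rminus_diag Rabs_R0 //. Qed.

Lemma cv_le_lim u l c N : Un_cv u l -> (forall k, (N <= k)%coq_nat -> u k <= c) -> l <= c.
Proof.
move=> Hu Hk; apply Rnot_lt_le => Hlt.
have [N' HN'] := Hu (l - c) ltac:(lra).
have := HN' (Nat.max N N') (Nat.le_max_r _ _).
have := Hk (Nat.max N N') (Nat.le_max_l _ _).
rewrite /R_dist => h1 h2.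
have := Rle_abs (l - u (Nat.max N N')); rewrite Rabs_minus_sym in h2; lra.
Qed.

Lemma cv_ge_lim u l c N : Un_cv u l -> (forall k, (N <= k)%coq_nat -> c <= u k) -> c <= l.
Proof.
move=> Hu Hk.
have := cv_le_lim (fun k => - u k) (- l) (- c) N.
move=> H; suff : - l <= - c by lra.
apply: H; last by move=> k hk; have := Hk k hk; lra.
by apply: CV_opp.
Qed.

Lemma sum_cv m (F : nat -> 'I_m -> R) (G : 'I_m -> R) :
  (forall i, Un_cv (fun k => F k i) (G i)) ->
  Un_cv (fun k => \big[Rplus/0]_(i < m) F k i) (\big[Rplus/0]_(i < m) G i).
Proof.
elim: m F G => [|n IH] F G H.
  rewrite big_ord0. have := cv_const 0. apply: Un_cv_ext => k; by rewrite big_ord0.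
rewrite big_ord_recr /=.
have := CV_plus _ _ _ _ (IH (fun k i => F k (widen_ord (leqnSn n) i)) (fun i => G (widen_ord (leqnSn n) i)) (fun i => H _)) (H ord_max).
apply: Un_cv_ext => k; by rewrite big_ord_recr.
Qed.

Section Compl.
Context {m : nat}.

Lemma vcomplete (xs : nat -> vec m) :
  (forall eps, 0 < eps -> exists N, forall n k, (N <= n)%coq_nat -> (N <= k)%coq_nat ->
     vnorm (vsub (xs n) (xs k)) < eps) -> exists a, vconv xs a.
Proof.
move=> Hc.
have Hci : forall i, Cauchy_crit (fun n => xs n i).
  move=> i e He; have [N HN] := Hc e He; exists N => n k hn hk.
  rewrite /R_dist; have := coord_le (vsub (xs n) (xs k)) i.
  have := HN n k hn hk; rewrite /vsub; lra.
pose a := fun i => proj1_sig (R_complete _ (Hci i)).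
have Ha : forall i, Un_cv (fun n => xs n i) (a i) by move=> i; exact: proj2_sig (R_complete _ (Hci i)).
exists a => e He.
have [N HN] := Hc (e / 2) ltac:(lra).
exists N => n hn.
have Hlim : inner (vsub (xs n) a) (vsub (xs n) a) <= (e/2) ^ 2.
  apply: (cv_le_lim (fun k => inner (vsub (xs n) (xs k)) (vsub (xs n) (xs k)))).
  - apply: sum_cv => i; rewrite /vsub.
    apply: CV_mult; apply: CV_minus; (apply cv_const || apply Ha).
  - move=> k hk; rewrite -vnorm_sq; have := HN n k hn hk; have := vnorm_ge0 (vsub (xs n) (xs k)); nra.
have := vnorm_sq (vsub (xs n) a); have := vnorm_ge0 (vsub (xs n) a). nra.
Qed.

Lemma vconv_norm (xs : nat -> vec m) a b :
  vconv xs a -> Un_cv (fun n => vnorm (vsub (xs n) b)) (vnorm (vsub a b)).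
Proof.
move=> H e He; have [N HN] := H e He; exists N => n hn.
rewrite /R_dist.
have h1 := vnorm_tri3 (xs n) a b.
have h2 := vnorm_tri3 a (xs n) b.
have := HN n hn; rewrite (vnorm_sym a (xs n)) in h2 => h3.
apply Rabs_def1; lra.
Qed.

Lemma vconv_bound (xs : nat -> vec m) a (c : nat -> R) :
  Un_cv c 0 -> (forall n, vnorm (vsub (xs n) a) <= c n) -> vconv xs a.
Proof.
move=> Hc Hb e He; have [N HN] := Hc e He; exists N => n hn.
have := HN n hn; rewrite /R_dist Rminus_0_r => h.
have := Rle_abs (c n); have := Hb n; lra.
Qed.

End Compl.

Lemma Rdiv_le_0_compat a b : 0 <= a -> 0 < b -> 0 <= a / b.
Proof. move=> ha hb; rewrite /Rdiv; apply Rmult_le_pos => //; apply Rlt_le, Rinv_0_lt_compat => //. Qed.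

Lemma inf_exists (S : R -> Prop) (b : R) :
  (exists r, S r) -> (forall r, S r -> b <= r) ->
  exists I, (forall r, S r -> I <= r) /\ (forall e, 0 < e -> exists r, S r /\ r < I + e).
Proof.
move=> [r0 Hr0] Hb.
have Hbd : bound (fun x => S (- x)) by exists (- b) => x hx; have := Hb _ hx; lra.
have Hne : exists x, S (- x) by exists (- r0); rewrite Ropp_involutive.
have [M [HM1 HM2]] := completeness _ Hbd Hne.
exists (- M); split.
  move=> r hr; have := HM1 (- r); rewrite Ropp_involutive => h; have := h hr; lra.
move=> e He; apply NNPP => Hn.
have : M <= M - e; last lra.
apply HM2 => x hx. apply Rnot_lt_le => hlt.
apply Hn; exists (- x); split => //; lra.
Qed.

Lemma lim_small A B C : (forall t, 0 < t < 1 -> A <= B + C * t) -> A <= B.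
Proof.
move=> H; apply Rnot_lt_le => hlt.
set d := A - B.
have Hd : 0 < d by rewrite /d; lra.
set t := d / (2 * (d + Rabs C)).
have HC := Rabs_pos C.
have Ht : 0 < t < 1.
  rewrite /t; split; first (apply Rdiv_lt_0_compat; lra).
  apply (Rmult_lt_reg_r (2 * (d + Rabs C))); first lra.
  rewrite /Rdiv Rmult_assoc Rinv_l; lra.
have h := H t Ht.
have : C * t <= Rabs C * t by have := Rle_abs C; nra.
have : Rabs C * t < d.
  rewrite /t.
  have -> : Rabs C * (d / (2 * (d + Rabs C))) = (Rabs C / (d + Rabs C)) * (d / 2) by fld.
  have : Rabs C / (d + Rabs C) <= 1.
    apply (Rmult_le_reg_r (d + Rabs C)); first lra.
    rewrite /Rdiv Rmult_assoc Rinv_l; lra.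
  nra.
rewrite /d in h * => *; lra.
Qed.

Lemma inv_small e : 0 < e -> exists N : nat, forall n, (N <= n)%coq_nat -> / (INR n + 1) < e.
Proof.
move=> He; have [N HN] := INR_archimed e 1 He.
exists N => n hn.
have hN : INR N <= INR n by apply le_INR.
have hpos : 0 < INR n + 1 by have := pos_INR n; lra.
apply (Rmult_lt_reg_r (INR n + 1)) => //.
rewrite Rinv_l; nra.
Qed.

Lemma cv_inv : Un_cv (fun n => / (INR n + 1)) 0.
Proof.
move=> e He; have [N HN] := inv_small e He; exists N => n hn.
rewrite /R_dist Rminus_0_r Rabs_right; first by apply HN.
have := pos_INR n => h; apply Rle_ge, Rlt_le, Rinv_0_lt_compat; lra.
Qed.

Definition ev {m} (f : vec m -> ER) x : R := match f x with Some r => r | None => 0 end.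

Lemma ev_dom {m} (f : vec m -> ER) x : dom f x -> f x = Some (ev f x).
Proof. rewrite /dom /ev; by case: (f x). Qed.

Lemma ERle_some {m} (f : vec m -> ER) x r : ERle (f x) (Some r) -> dom f x /\ ev f x <= r.
Proof. rewrite /dom /ev; case: (f x) => //= a h; split => //. Qed.

Section Convex.
Context {m : nat}.
Variable f : vec m -> ER.
Hypothesis Hcl : closed_fun f.
Hypothesis Hcv : convex_efun f.

Lemma conv_e x y t : dom f x -> dom f y -> 0 <= t <= 1 ->
  dom f (vadd (vscale t x) (vscale (1 - t) y)) /\
  ev f (vadd (vscale t x) (vscale (1 - t) y)) <= t * ev f x + (1 - t) * ev f y.
Proof.
move=> hx hy ht; have [fx [fy [e1 [e2 h]]]] := Hcv x y t hx hy ht.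
have := ERle_some _ _ _ h.
by rewrite /ev e1 e2.
Qed.

Lemma closed_e (xs : nat -> vec m) (rs : nat -> R) x r :
  (forall n, dom f (xs n)) -> (forall n, ev f (xs n) <= rs n) -> vconv xs x -> Un_cv rs r ->
  dom f x /\ ev f x <= r.
Proof.
move=> hd hle hc hr; apply: ERle_some; apply: (Hcl xs rs) => // n.
by rewrite (ev_dom _ _ (hd n)) /=.
Qed.

Lemma lsc_local a : dom f a ->
  exists d, 0 < d /\ forall w, dom f w -> vnorm (vsub w a) < d -> ev f a - 1 <= ev f w.
Proof.
move=> ha; apply NNPP => Hn.
have H1 : forall n : nat, exists w, dom f w /\ vnorm (vsub w a) < / (INR n + 1) /\ ev f w < ev f a - 1.
  move=> n; apply NNPP => Hw; apply Hn; exists (/ (INR n + 1)); split.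
    have := pos_INR n => h; apply Rinv_0_lt_compat; lra.
  move=> w hw hd; apply Rnot_lt_le => hl; apply Hw; by exists w.
pose ws := fun n => proj1_sig (constructive_indefinite_description _ (H1 n)).
have Hws : forall n, dom f (ws n) /\ vnorm (vsub (ws n) a) < / (INR n + 1) /\ ev f (ws n) < ev f a - 1.
  move=> n; exact: proj2_sig (constructive_indefinite_description _ (H1 n)).
have [_ h] := closed_e ws (fun _ => ev f a - 1) a (ev f a - 1)
  (fun n => proj1 (Hws n)) (fun n => Rlt_le _ _ (proj2 (proj2 (Hws n))))
  (vconv_bound _ _ _ cv_inv (fun n => Rlt_le _ _ (proj1 (proj2 (Hws n))))) (cv_const _).
lra.
Qed.


Lemma lower_lin a : dom f a ->
  exists d, 0 < d /\ forall w, dom f w -> ev f a - 1 - vnorm (vsub w a) / d <= ev f w.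
Proof.
move=> ha; have [d [Hd H]] := lsc_local a ha.
exists (d / 2); split; first lra.
move=> w hw.
have Hn := vnorm_ge0 (vsub w a).
case: (Rlt_le_dec (vnorm (vsub w a)) d) => hlt.
  have := H w hw hlt.
  have : 0 <= vnorm (vsub w a) / (d / 2) by apply Rdiv_le_0_compat; lra.
  lra.
set r := vnorm (vsub w a) in Hn hlt *.
set s := (d / 2) / r.
have Hr : 0 < r by lra.
have Hs : 0 <= s <= 1.
  rewrite /s; split; first (apply Rdiv_le_0_compat; lra).
  apply (Rmult_le_reg_r r) => //; rewrite /Rdiv Rmult_assoc Rinv_l; lra.
have [hp1 hp2] := conv_e w a s hw ha Hs.
have Hpa : vsub (vadd (vscale s w) (vscale (1 - s) a)) a = vscale s (vsub w a).
  apply functional_extensionality => i; rewrite /vsub /vadd /vscale; ring.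
have Hsr : s * r = d / 2 by rewrite /s; fld.
have := H _ hp1; rewrite Hpa vnorm_scale Rabs_right; last lra.
rewrite -/r Hsr => h; have := h ltac:(lra) => {}h.
have Hs0 : 0 < s by rewrite /s; apply Rdiv_lt_0_compat; lra.
have : s * (ev f a - 1 - r / (d / 2)) <= s * ev f w.
  have -> : s * (ev f a - 1 - r / (d / 2)) = s * ev f a - s - 1.
    have -> : r / (d / 2) = / s by rewrite /s; field; split; lra.
    fld.
  nra.
move=> h2; apply (Rmult_le_reg_l s) => //.
Qed.

Definition hprox a lam w := ev f w + vnorm (vsub w a) ^ 2 / (2 * lam).

Lemma prox_exists a lam : dom f a -> 0 < lam ->
  exists p, dom f p /\ forall w, dom f w -> hprox a lam p <= hprox a lam w.
Proof.
move=> ha hl; have [d [Hd Hlow]] := lower_lin a ha.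
have Hb : forall r, (exists w, dom f w /\ r = hprox a lam w) -> ev f a - 1 - lam / (2 * d ^ 2) <= r.
  move=> r [w [hw ->]]; rewrite /hprox.
  have := Hlow w hw; have := vnorm_ge0 (vsub w a).
  set q := vnorm (vsub w a) => hq h.
  have : 0 <= (q - lam / d) ^ 2 / (2 * lam) by apply Rdiv_le_0_compat; [apply pow2_ge_0 | lra].
  have -> : (q - lam / d) ^ 2 / (2 * lam) = q ^ 2 / (2 * lam) - q / d + lam / (2 * d ^ 2) by fld.
  lra.
have [I [HI1 HI2]] := inf_exists _ _ (ex_intro _ (hprox a lam a) (ex_intro _ a (conj ha erefl))) Hb.
have H1 : forall n : nat, exists w, dom f w /\ hprox a lam w < I + / (INR n + 1).
  move=> n; have [r [[w [hw ->]] hr]] := HI2 (/ (INR n + 1)) ltac:(have := pos_INR n => h; apply Rinv_0_lt_compat; lra).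
  by exists w.
pose ws := fun n => proj1_sig (constructive_indefinite_description _ (H1 n)).
have Hws : forall n, dom f (ws n) /\ hprox a lam (ws n) < I + / (INR n + 1).
  move=> n; exact: proj2_sig (constructive_indefinite_description _ (H1 n)).
have HwI : forall n, I <= hprox a lam (ws n) by move=> n; apply HI1; exists (ws n); split => //; apply Hws.
have Hcauchy : forall n k, vnorm (vsub (ws n) (ws k)) ^ 2 <= 4 * lam * (/ (INR n + 1) + / (INR k + 1)).
  move=> n k.
  have [hm1 hm2] := conv_e (ws n) (ws k) (1/2) (proj1 (Hws n)) (proj1 (Hws k)) ltac:(lra).
  have := HI1 _ (ex_intro _ _ (conj hm1 erefl)).
  have Hid : vnorm (vsub (vadd (vscale (1 / 2) (ws n)) (vscale (1 - 1 / 2) (ws k))) a) ^ 2 =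
    (vnorm (vsub (ws n) a) ^ 2 + vnorm (vsub (ws k) a) ^ 2) / 2 - vnorm (vsub (ws n) (ws k)) ^ 2 / 4.
    rewrite !vnorm_sq; vring.
  rewrite /hprox Hid.
  have := Hws n; have := Hws k; rewrite /hprox; move=> [_ h1] [_ h2] h3.
  have Hx : ((vnorm (vsub (ws n) a) ^ 2 + vnorm (vsub (ws k) a) ^ 2) / 2 - vnorm (vsub (ws n) (ws k)) ^ 2 / 4) / (2 * lam)
     = vnorm (vsub (ws n) a) ^ 2 / (2 * lam) / 2 + vnorm (vsub (ws k) a) ^ 2 / (2 * lam) / 2 - vnorm (vsub (ws n) (ws k)) ^ 2 / (8 * lam).
    fld.
  rewrite Hx in h3.
  have : (vnorm (vsub (ws n) (ws k)) ^ 2) / (8 * lam) < / (INR n + 1) / 2 + / (INR k + 1) / 2 by lra.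
  move=> h; apply (Rmult_le_reg_r (/ (8 * lam))); first (apply Rinv_0_lt_compat; lra).
  have -> : 4 * lam * (/ (INR n + 1) + / (INR k + 1)) * / (8 * lam) = / (INR n + 1) / 2 + / (INR k + 1) / 2 by have := pos_INR n; have := pos_INR k; move=> *; fld.
  rewrite /Rdiv in h; lra.
have [p Hp] : exists p, vconv ws p.
  apply vcomplete => e He.
  have [N HN] := inv_small (e ^ 2 / (8 * lam)) ltac:(apply Rdiv_lt_0_compat; nra).
  exists N => n k hn hk.
  have := Hcauchy n k; have := HN n hn; have := HN k hk.
  have := vnorm_ge0 (vsub (ws n) (ws k)).
  set D := vnorm (vsub (ws n) (ws k)) => hD h1 h2 h3.
  have : D ^ 2 < e ^ 2.
    have : 4 * lam * (/ (INR n + 1) + / (INR k + 1)) < 4 * lam * (e ^ 2 / (8 * lam) + e ^ 2 / (8 * lam)) by nra.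
    have -> : 4 * lam * (e ^ 2 / (8 * lam) + e ^ 2 / (8 * lam)) = e ^ 2 by fld.
    lra.
  nra.
have Hhcv : Un_cv (fun n => hprox a lam (ws n)) I.
  move=> e He; have [N HN] := inv_small e He; exists N => n hn.
  rewrite /R_dist; have := HN n hn; have := proj2 (Hws n); have := HwI n.
  move=> *; apply Rabs_def1; lra.
have Hncv : Un_cv (fun n => vnorm (vsub (ws n) a) ^ 2 / (2 * lam)) (vnorm (vsub p a) ^ 2 / (2 * lam)).
  have h := vconv_norm ws p a Hp.
  have h2 := CV_mult _ _ _ _ h h.
  have h3 := CV_mult _ _ _ _ h2 (cv_const (/ (2 * lam))).
  have -> : vnorm (vsub p a) ^ 2 / (2 * lam) = vnorm (vsub p a) * vnorm (vsub p a) * / (2 * lam) by rewrite /Rdiv /=; ring.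
  move: h3; apply: Un_cv_ext => n; rewrite /Rdiv /=; ring.
have [hpd hpe] := closed_e ws (fun n => hprox a lam (ws n) - vnorm (vsub (ws n) a) ^ 2 / (2 * lam)) p
   (I - vnorm (vsub p a) ^ 2 / (2 * lam)) (fun n => proj1 (Hws n)) ltac:(move=> n; rewrite /hprox; lra) Hp
   (CV_minus _ _ _ _ Hhcv Hncv).
exists p; split => // w hw.
have := HI1 _ (ex_intro _ w (conj hw erefl)); rewrite /hprox; lra.
Qed.

Lemma prox_subgrad a lam p : 0 < lam -> dom f p ->
  (forall w, dom f w -> hprox a lam p <= hprox a lam w) ->
  forall u, dom f u -> ev f p + inner (vscale (/ lam) (vsub a p)) (vsub u p) <= ev f u.
Proof.
move=> hl hp Hmin u hu.
have Hid : inner (vscale (/ lam) (vsub a p)) (vsub u p) = - (inner (vsub p a) (vsub u p) / lam).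
  vring.
rewrite Hid.
suff : ev f p <= ev f u + inner (vsub p a) (vsub u p) / lam by lra.
apply: (lim_small _ _ (vnorm (vsub u p) ^ 2 / (2 * lam))) => t ht.
have [hw1 hw2] := conv_e u p t hu hp ltac:(lra).
have := Hmin _ hw1; rewrite /hprox.
have -> : vnorm (vsub (vadd (vscale t u) (vscale (1 - t) p)) a) ^ 2 =
  vnorm (vsub p a) ^ 2 + 2 * t * inner (vsub p a) (vsub u p) + t ^ 2 * vnorm (vsub u p) ^ 2.
  rewrite !vnorm_sq; vring.
move=> h.
have : t * ev f p <= t * (ev f u + inner (vsub p a) (vsub u p) / lam + vnorm (vsub u p) ^ 2 / (2 * lam) * t).
  have -> : t * (ev f u + inner (vsub p a) (vsub u p) / lam + vnorm (vsub u p) ^ 2 / (2 * lam) * t) =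
    t * ev f u + (2 * t * inner (vsub p a) (vsub u p) + t ^ 2 * vnorm (vsub u p) ^ 2) / (2 * lam) by fld.
  have E : (vnorm (vsub p a) ^ 2 + 2 * t * inner (vsub p a) (vsub u p) + t ^ 2 * vnorm (vsub u p) ^ 2) / (2 * lam)
    = vnorm (vsub p a) ^ 2 / (2 * lam) + (2 * t * inner (vsub p a) (vsub u p) + t ^ 2 * vnorm (vsub u p) ^ 2) / (2 * lam) by fld.
  rewrite E in h.
  lra.
move=> h2; apply (Rmult_le_reg_l t); lra.
Qed.

Lemma prox_near a lam p d : 0 < lam -> 0 < d ->
  (forall w, dom f w -> ev f a - 1 - vnorm (vsub w a) / d <= ev f w) ->
  dom f a -> dom f p ->
  (forall w, dom f w -> hprox a lam p <= hprox a lam w) ->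
  vnorm (vsub p a) ^ 2 <= 4 * lam + 4 * lam ^ 2 / d ^ 2.
Proof.
move=> hl hd Hlow ha hp Hmin.
have := Hmin a ha; rewrite /hprox.
have -> : vsub a a = (fun _ => 0) by apply functional_extensionality => i; rewrite /vsub; ring.
have -> : vnorm (fun _ : 'I_m => 0) = 0.
  rewrite /vnorm /inner.
  have -> : \big[Rplus/0]_(i < m) (0 * 0) = \big[Rplus/0]_(i < m) (0 * 0 * 0) by apply sumR_ext => i; ring.
  by rewrite sumR_scale !Rmult_0_l sqrt_0.
have := Hlow p hp; have := vnorm_ge0 (vsub p a).
set r := vnorm (vsub p a) => hr h1 h2.
have E0 : 0 ^ 2 / (2 * lam) = 0 by fld.
have h3 : r ^ 2 / (2 * lam) <= 1 + r / d by lra.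
have h4 : r ^ 2 <= 2 * lam + 2 * lam * (r / d).
  have := Rmult_le_compat_l (2 * lam) _ _ ltac:(lra) h3.
  have -> : 2 * lam * (r ^ 2 / (2 * lam)) = r ^ 2 by fld.
  lra.
have h5 : 2 * lam * (r / d) <= r ^ 2 / 2 + 2 * lam ^ 2 / d ^ 2.
  have : 0 <= (r - 2 * lam / d) ^ 2 / 2 by apply Rdiv_le_0_compat; [apply pow2_ge_0|lra].
  have -> : (r - 2 * lam / d) ^ 2 / 2 = r ^ 2 / 2 + 2 * lam ^ 2 / d ^ 2 - 2 * lam * (r / d) by fld.
  lra.
lra.
Qed.

Lemma value_sc mu : 0 <= mu -> strongly_convex f mu -> forall x z t, dom f x -> dom f z -> 0 <= t <= 1 ->
  dom f (vadd (vscale t x) (vscale (1 - t) z)) /\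
  ev f (vadd (vscale t x) (vscale (1 - t) z)) <=
    t * ev f x + (1 - t) * ev f z - mu / 2 * (t * (1 - t)) * vnorm (vsub x z) ^ 2.
Proof.
move=> Hmu Hsc x z t hx hz ht.
set w := vadd (vscale t x) (vscale (1 - t) z).
have [hw _] := conv_e x z t hx hz ht.
split => //.
have [d [Hd Hlow]] := lower_lin w hw.
pose lam := fun n : nat => (/ (INR n + 1)) ^ 2.
have Hlam : forall n, 0 < lam n /\ lam n <= 1.
  move=> n; have := pos_INR n => h0.
  have h1 : 0 < / (INR n + 1) by apply Rinv_0_lt_compat; lra.
  have h2 : / (INR n + 1) <= 1.
    apply (Rmult_le_reg_r (INR n + 1)); first lra. rewrite Rinv_l; lra.
  rewrite /lam; split; nra.
have H1 : forall n, exists p, dom f p /\ forall w', dom f w' -> hprox w (lam n) p <= hprox w (lam n) w'.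
  move=> n; apply prox_exists => //; apply Hlam.
pose ps := fun n => proj1_sig (constructive_indefinite_description _ (H1 n)).
have Hps : forall n, dom f (ps n) /\ forall w', dom f w' -> hprox w (lam n) (ps n) <= hprox w (lam n) w'.
  move=> n; exact: proj2_sig (constructive_indefinite_description _ (H1 n)).
set RHS := t * ev f x + (1 - t) * ev f z - mu / 2 * (t * (1 - t)) * vnorm (vsub x z) ^ 2.
have Hbound : forall n, ev f (ps n) <= RHS.
  move=> n; have [hp Hmin] := Hps n; have [hl _] := Hlam n.
  have Hsub := prox_subgrad w (lam n) (ps n) hl hp Hmin.
  set g := vscale (/ lam n) (vsub w (ps n)) in Hsub.
  have Hsg : subgrad f (ps n) g.
    exists (ev f (ps n)); split; first by apply ev_dom.
    move=> u; case hu: (f u) => [fu|] //=.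
    have hdu : dom f u by rewrite /dom hu.
    have := Hsub u hdu; rewrite /ev hu; lra.
  have Ex := Hsc x (ps n) g (ev f x) (ev f (ps n)) (ev_dom _ _ hx) (ev_dom _ _ hp) Hsg.
  have Ez := Hsc z (ps n) g (ev f z) (ev f (ps n)) (ev_dom _ _ hz) (ev_dom _ _ hp) Hsg.
  have Id1 : t * inner g (vsub x (ps n)) + (1 - t) * inner g (vsub z (ps n)) =
     / lam n * inner (vsub w (ps n)) (vsub w (ps n)).
    rewrite /g /w; vring.
  have Id2 : t * vnorm (vsub x (ps n)) ^ 2 + (1 - t) * vnorm (vsub z (ps n)) ^ 2 =
     vnorm (vsub w (ps n)) ^ 2 + t * (1 - t) * vnorm (vsub x z) ^ 2.
    rewrite !vnorm_sq /w; vring.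
  have Hpos : 0 <= / lam n * inner (vsub w (ps n)) (vsub w (ps n)).
    apply Rmult_le_pos; [apply Rlt_le, Rinv_0_lt_compat => //| apply inner_ge0].
  have Hpos2 := pow2_ge_0 (vnorm (vsub w (ps n))).
  rewrite /RHS.
  apply Rge_le in Ex; apply Rge_le in Ez.
  have E1 := Rmult_le_compat_l t _ _ (proj1 ht) Ex.
  have E2 := Rmult_le_compat_l (1 - t) _ _ ltac:(lra) Ez.
  nra.
set K := 4 + 4 / d ^ 2.
have HK0 : 0 <= 4 / d ^ 2 by apply Rdiv_le_0_compat; [lra|nra].
have HK : 0 <= K by rewrite /K; lra.
have Hpsw : vconv ps w.
  apply: (vconv_bound _ _ (fun n => sqrt K * / (INR n + 1))).
    have := CV_mult _ _ _ _ (cv_const (sqrt K)) cv_inv; rewrite Rmult_0_r; by apply Un_cv_ext.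
  move=> n; have [hp Hmin] := Hps n; have [hl hl1] := Hlam n.
  have := prox_near w (lam n) (ps n) d hl Hd Hlow hw hp Hmin.
  have hsq : sqrt K ^ 2 = K by rewrite /= Rmult_1_r sqrt_sqrt.
  have hs0 := sqrt_pos K.
  have hi : 0 <= / (INR n + 1) by have := pos_INR n; move=> h0; apply Rlt_le, Rinv_0_lt_compat; lra.
  have Hd2 : 0 < d ^ 2 by nra.
  have : 4 * lam n + 4 * lam n ^ 2 / d ^ 2 <= K * lam n.
    rewrite /K.
    have -> : K * lam n = 4 * lam n + 4 * lam n / d ^ 2 by rewrite /K; fld.
    have : lam n ^ 2 <= lam n by nra.
    move=> h; have : 4 * lam n ^ 2 / d ^ 2 <= 4 * lam n / d ^ 2.
      rewrite /Rdiv; apply Rmult_le_compat_r; [apply Rlt_le, Rinv_0_lt_compat => //|lra].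
    lra.
  rewrite /lam => h1 h2.
  have := vnorm_ge0 (vsub (ps n) w) => h3.
  have hv2 : vnorm (vsub (ps n) w) ^ 2 <= (sqrt K * / (INR n + 1)) ^ 2.
    rewrite Rpow_mult_distr hsq; lra.
  have hs1 : 0 <= sqrt K * / (INR n + 1) by apply Rmult_le_pos.
  nra.
have [_ hf] := closed_e ps (fun _ => RHS) w RHS (fun n => proj1 (Hps n)) Hbound Hpsw (cv_const _).
exact hf.
Qed.
End Convex.

Section Smooth.
Context {m : nat}.
Variable xi1 : vec m -> R.
Variable g : vec m -> vec m.
Hypothesis Hconv : convex_fun xi1.
Hypothesis Hgrad : is_gradient xi1 g.

Lemma grad_ineq y z : xi1 y + inner (g y) (vsub z y) <= xi1 z.
Proof.
set h := vsub z y.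
suff : inner (g y) h <= xi1 z - xi1 y by lra.
apply: (lim_small _ _ (vnorm h)) => e he.
have [d [hd Hd]] := Hgrad y e ltac:(lra).
have hn := vnorm_ge0 h.
set t := Rmin (1/2) (d / (2 * (vnorm h + 1))).
have ht : 0 < t <= 1 / 2.
  split; last by apply Rmin_l.
  apply Rmin_pos; [lra|apply Rdiv_lt_0_compat; lra].
have htn : t * vnorm h < d.
  have : t <= d / (2 * (vnorm h + 1)) by apply Rmin_r.
  move=> h1; have : t * vnorm h <= d / (2 * (vnorm h + 1)) * vnorm h by nra.
  have : d / (2 * (vnorm h + 1)) * vnorm h < d.
    have -> : d / (2 * (vnorm h + 1)) * vnorm h = d * (vnorm h / (2 * (vnorm h + 1))) by fld.
    have : vnorm h / (2 * (vnorm h + 1)) < 1.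
      apply (Rmult_lt_reg_r (2 * (vnorm h + 1))); first lra.
      rewrite /Rdiv Rmult_assoc Rinv_l; lra.
    nra.
  lra.
have Hth := Hd (vscale t h); rewrite vnorm_scale Rabs_right in Hth; last lra.
have := Hth htn => {}Hth.
have Heq : vadd y (vscale t h) = vadd (vscale t z) (vscale (1 - t) y).
  apply functional_extensionality => i; rewrite /vadd /vscale /h /vsub; ring.
rewrite Heq in Hth.
have Hc := Hconv z y t ltac:(lra).
have Hi : inner (g y) (vscale t h) = t * inner (g y) h by vring.
rewrite Hi in Hth.
have h1 := Rle_abs (- (xi1 (vadd (vscale t z) (vscale (1 - t) y)) - xi1 y - t * inner (g y) h)); rewrite Rabs_Ropp in h1.
have : t * (inner (g y) h - e * vnorm h) <= t * (xi1 z - xi1 y) by nra.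
move=> h3; have := Rmult_le_reg_l t _ _ (proj1 ht) h3. lra.
Qed.

Lemma grad_cont (xs : nat -> vec m) a : vconv xs a -> Un_cv (fun n => xi1 (xs n)) (xi1 a).
Proof.
move=> Hc e he.
have [d [hd Hd]] := Hgrad a 1 ltac:(lra).
set G := vnorm (g a) + 1.
have hG : 0 < G by have := vnorm_ge0 (g a); rewrite /G; lra.
have [N HN] := Hc (Rmin d (e / (2 * G))) ltac:(apply Rmin_pos => //; apply Rdiv_lt_0_compat; lra).
exists N => n hn.
have h1 := HN n hn.
have h2 : vnorm (vsub (xs n) a) < d by have := Rmin_l d (e / (2 * G)); lra.
have h3 : vnorm (vsub (xs n) a) < e / (2 * G) by have := Rmin_r d (e / (2 * G)); lra.
have Heq : vadd a (vsub (xs n) a) = xs n.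
  apply functional_extensionality => i; rewrite /vadd /vsub; ring.
have := Hd _ h2; rewrite Heq => h4.
have h5 := cauchy_schwarz (g a) (vsub (xs n) a).
have h6 := vnorm_ge0 (vsub (xs n) a).
have h7 := vnorm_ge0 (g a).
rewrite /R_dist.
have h8 : Rabs (xi1 (xs n) - xi1 a) <= G * vnorm (vsub (xs n) a).
  have := Rabs_triang (xi1 (xs n) - xi1 a - inner (g a) (vsub (xs n) a)) (inner (g a) (vsub (xs n) a)).
  have -> : xi1 (xs n) - xi1 a - inner (g a) (vsub (xs n) a) + inner (g a) (vsub (xs n) a) = xi1 (xs n) - xi1 a by ring.
  rewrite /G; lra.
have : G * vnorm (vsub (xs n) a) < G * (e / (2 * G)) by nra.
have -> : G * (e / (2 * G)) = e / 2 by fld.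
lra.
Qed.

End Smooth.

Section Step.
Context {m : nat}.
Variables (U : vec m -> Prop) (xi1 : vec m -> R) (g1 : vec m -> vec m) (xi2 : vec m -> ER) (mu : R).
Hypothesis HUc : vconvex_set U.
Hypothesis Hx1 : convex_fun xi1.
Hypothesis Hg : is_gradient xi1 g1.
Hypothesis Hcl : closed_fun xi2.
Hypothesis Hcv : convex_efun xi2.
Hypothesis Hmu : 0 < mu.
Hypothesis Hsc : strongly_convex xi2 mu.

Definition qv y Lk w := xi1 y + inner (g1 y) (vsub w y) + Lk / 2 * vnorm (vsub w y) ^ 2.
Definition Fv w := xi1 w + ev xi2 w.

Lemma model_ineq y Lk x z : 0 < Lk ->
  is_min_over U (model xi1 g1 xi2 y Lk) x -> U z -> dom xi2 z ->
  dom xi2 x /\ qv y Lk x + ev xi2 x + (Lk + mu) / 2 * vnorm (vsub z x) ^ 2 <= qv y Lk z + ev xi2 z.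
Proof.
move=> hL [hUx Hmin] hUz hz.
have Hm : forall w, dom xi2 w -> model xi1 g1 xi2 y Lk w = Some (qv y Lk w + ev xi2 w).
  by move=> w hw; rewrite /model (ev_dom _ _ hw).
have hx : dom xi2 x.
  have := Hmin z hUz; rewrite (Hm z hz) /model /dom; by case: (xi2 x).
split => //.
have Hle : forall w, U w -> dom xi2 w -> qv y Lk x + ev xi2 x <= qv y Lk w + ev xi2 w.
  by move=> w hUw hw; have := Hmin w hUw; rewrite (Hm w hw) (Hm x hx).
set C := (Lk + mu) / 2 * vnorm (vsub z x) ^ 2.
suff : qv y Lk x + ev xi2 x <= qv y Lk z + ev xi2 z - C + C * 0 by rewrite /C; lra.
apply: (lim_small _ _ C) => t ht.
set w := vadd (vscale t z) (vscale (1 - t) x).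
have [hw hsc] := value_sc xi2 Hcl Hcv mu ltac:(lra) Hsc z x t hz hx ltac:(lra).
have Hq : qv y Lk w = t * qv y Lk z + (1 - t) * qv y Lk x - Lk / 2 * (t * (1 - t)) * vnorm (vsub z x) ^ 2.
  rewrite /qv /w !vnorm_sq.
  have I1 : inner (g1 y) (vsub (vadd (vscale t z) (vscale (1 - t) x)) y) =
    t * inner (g1 y) (vsub z y) + (1 - t) * inner (g1 y) (vsub x y) by vring.
  have I2 : inner (vsub (vadd (vscale t z) (vscale (1 - t) x)) y) (vsub (vadd (vscale t z) (vscale (1 - t) x)) y) =
    t * inner (vsub z y) (vsub z y) + (1 - t) * inner (vsub x y) (vsub x y) - t * (1 - t) * inner (vsub z x) (vsub z x) by vring.
  rewrite I1 I2; ring.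
have := Hle w (HUc z x t hUz hUx ltac:(lra)) hw.
rewrite Hq -/w => h.
rewrite -/w in hsc.
set N := vnorm (vsub z x) ^ 2 in hsc h C *.
have h3 : qv y Lk x + ev xi2 x <= t * qv y Lk z + (1 - t) * qv y Lk x + t * ev xi2 z + (1 - t) * ev xi2 x
   - (Lk / 2 * (t * (1 - t)) * N + mu / 2 * (t * (1 - t)) * N) by lra.
have E1 : t * (qv y Lk z + ev xi2 z - C + C * 0 + C * t) - t * (qv y Lk x + ev xi2 x) =
  t * qv y Lk z + (1 - t) * qv y Lk x + t * ev xi2 z + (1 - t) * ev xi2 x
   - (Lk / 2 * (t * (1 - t)) * N + mu / 2 * (t * (1 - t)) * N) - (qv y Lk x + ev xi2 x) by rewrite /C; fld.
have : t * (qv y Lk x + ev xi2 x) <= t * (qv y Lk z + ev xi2 z - C + C * 0 + C * t) by lra.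
move=> h2; apply (Rmult_le_reg_l t); lra.
Qed.

Lemma step_ineq y Lk x z : 0 < Lk ->
  is_min_over U (model xi1 g1 xi2 y Lk) x -> descent xi1 g1 y x Lk -> U z -> dom xi2 z ->
  dom xi2 x /\ Fv x + (Lk + mu) / 2 * vnorm (vsub z x) ^ 2 <= Fv z + Lk / 2 * vnorm (vsub z y) ^ 2.
Proof.
move=> hL hmin hdesc hUz hz.
have [hx h] := model_ineq y Lk x z hL hmin hUz hz.
split => //.
have := grad_ineq xi1 g1 Hx1 Hg y z.
move: hdesc h; rewrite /descent /Fv /qv; lra.
Qed.
End Step.

Lemma norm_add_eps {m} (a b : vec m) e : 0 < e ->
  vnorm (vadd a b) ^ 2 <= (1 + e) * vnorm a ^ 2 + (1 + / e) * vnorm b ^ 2.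
Proof.
move=> he; rewrite !vnorm_sq.
have -> : inner (vadd a b) (vadd a b) = inner a a + 2 * inner a b + inner b b by vring.
have := inner_le_eps a b e he.
have -> : inner b b / e = / e * inner b b by rewrite /Rdiv; ring.
lra.
Qed.


Lemma sub1S k : (S k - 1)%nat = k.
Proof. by rewrite subn1. Qed.

Section Main.
Context {m : nat}.
Variables (U : vec m -> Prop) (xi1 : vec m -> R) (g1 : vec m -> vec m) (xi2 : vec m -> ER) (L mu : R)
  (u ut : nat -> vec m) (Ls omega : nat -> R).
Hypothesis HUcl : vclosed_set U.
Hypothesis HUc : vconvex_set U.
Hypothesis Hx1 : convex_fun xi1.
Hypothesis Hg : is_gradient xi1 g1.
Hypothesis HL : 0 < L.
Hypothesis Hcl : closed_fun xi2.
Hypothesis Hcv : convex_efun xi2.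
Hypothesis Hmu : 0 < mu.
Hypothesis Hsc : strongly_convex xi2 mu.
Hypothesis HU0 : U (u 0%nat).
Hypothesis Hd0 : dom xi2 (u 0%nat).
Hypothesis HLs : forall k, 0 < Ls k <= L.
Hypothesis Hom : forall k, 0 <= omega k <= sqrt (Ls k / Ls (S k)).
Hypothesis Hstep : forall k : nat,
     let yhat := vadd (u k) (vscale (omega k) (vsub (u k) (u (k - 1)%nat))) in
     is_min_over U (model xi1 g1 xi2 yhat (Ls (S k))) (ut (S k)) /\
     (ERlt (xi_sum xi1 xi2 (u k)) (xi_sum xi1 xi2 (ut (S k))) ->
        is_min_over U (model xi1 g1 xi2 (u k) (Ls (S k))) (u (S k)) /\
        descent xi1 g1 (u k) (u (S k)) (Ls (S k))) /\
     (~ ERlt (xi_sum xi1 xi2 (u k)) (xi_sum xi1 xi2 (ut (S k))) ->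
        u (S k) = ut (S k) /\
        descent xi1 g1 yhat (u (S k)) (Ls (S k))).

Definition yh k := vadd (u k) (vscale (omega k) (vsub (u k) (u (k - 1)%nat))).
Definition dd k := vnorm (vsub (u k) (u (k - 1)%nat)).
Definition F := Fv xi1 xi2.

Lemma center k : exists y, is_min_over U (model xi1 g1 xi2 y (Ls (S k))) (u (S k)) /\
   descent xi1 g1 y (u (S k)) (Ls (S k)) /\ (y = u k \/ y = yh k).
Proof.
move: (Hstep k) => /= [Hut [H1 H2]].
case: (classic (ERlt (xi_sum xi1 xi2 (u k)) (xi_sum xi1 xi2 (ut (S k))))) => h.
  have [a b] := H1 h; exists (u k); by split; [|split; [|left]].
have [a b] := H2 h; exists (yh k); split; first by rewrite a.
by split; [|right].
Qed.

Lemma dU_all k : U (u k) /\ dom xi2 (u k).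
Proof.
elim: k => [|k [hU hd]]; first by split.
have [y [hmin [hdesc _]]] := center k.
split; first by case: hmin.
have [hL _] := HLs (S k).
by have [] := step_ineq U xi1 g1 xi2 mu HUc Hx1 Hg Hcl Hcv Hmu Hsc y (Ls (S k)) (u (S k)) (u k) hL hmin hdesc hU hd.
Qed.

Lemma om_sq k : Ls (S k) * omega k ^ 2 <= Ls k.
Proof.
have [h1 h2] := Hom k; have [a b] := HLs k; have [c e] := HLs (S k).
have hr : 0 <= Ls k / Ls (S k) by apply Rdiv_le_0_compat; lra.
have : omega k ^ 2 <= Ls k / Ls (S k).
  have := sqrt_pos (Ls k / Ls (S k)) => hs.
  have := sqrt_sqrt _ hr => hss. nra.
move=> h; have := Rmult_le_compat_l (Ls (S k)) _ _ ltac:(lra) h.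
have -> : Ls (S k) * (Ls k / Ls (S k)) = Ls k by fld.
done.
Qed.

Lemma center_dist k y : (y = u k \/ y = yh k) ->
  Ls (S k) * vnorm (vsub (u k) y) ^ 2 <= Ls k * dd k ^ 2.
Proof.
have [a b] := HLs k; have hd := vnorm_ge0 (vsub (u k) (u (k - 1)%nat)).
case=> ->.
  have -> : vsub (u k) (u k) = vscale 0 (u k) by apply functional_extensionality => i; rewrite /vsub /vscale; ring.
  rewrite vnorm_scale Rabs_R0 /dd; nra.
have -> : vsub (u k) (yh k) = vscale (- omega k) (vsub (u k) (u (k - 1)%nat)).
  apply functional_extensionality => i; rewrite /yh /vsub /vadd /vscale; ring.
rewrite vnorm_scale Rabs_Ropp Rabs_right; last by have := Hom k; lra.
have := om_sq k; rewrite /dd.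
have := pow2_ge_0 (vnorm (vsub (u k) (u (k - 1)%nat))).
move=> h1 h2.
have -> : Ls (S k) * (omega k * vnorm (vsub (u k) (u (k - 1)%nat))) ^ 2 =
  (Ls (S k) * omega k ^ 2) * vnorm (vsub (u k) (u (k - 1)%nat)) ^ 2 by ring.
by apply Rmult_le_compat_r.
Qed.

Definition Phi k := F (u k) + Ls k / 2 * dd k ^ 2.

Lemma Phi_dec k : Phi (S k) + mu / 2 * dd (S k) ^ 2 <= Phi k.
Proof.
have [y [hmin [hdesc hy]]] := center k.
have [hU hd] := dU_all k.
have [hL hL2] := HLs (S k).
have [_ h] := step_ineq U xi1 g1 xi2 mu HUc Hx1 Hg Hcl Hcv Hmu Hsc y (Ls (S k)) (u (S k)) (u k) hL hmin hdesc hU hd.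
have := center_dist k y hy.
rewrite /Phi /dd sub1S (vnorm_sym (u (S k)) (u k)) /F.
move: h; set A := vnorm (vsub (u k) (u (S k))) ^ 2; set B := vnorm (vsub (u k) y) ^ 2.
move=> h h2.
lra.
Qed.

Definition Kc := L * (1 + L / mu).

Lemma err k z : U z -> dom xi2 z -> F (u (S k)) - F z <= Kc * (dd (S k) ^ 2 + dd k ^ 2).
Proof.
move=> hUz hz.
have [y [hmin [hdesc hy]]] := center k.
have [hL hL2] := HLs (S k).
have [_ h] := step_ineq U xi1 g1 xi2 mu HUc Hx1 Hg Hcl Hcv Hmu Hsc y (Ls (S k)) (u (S k)) z hL hmin hdesc hUz hz.
set x := u (S k) in h *.
set L' := Ls (S k) in h hL hL2 *.
have Hsplit : vsub z y = vadd (vsub z x) (vsub x y) by apply vsub_split.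
have He := norm_add_eps (vsub z x) (vsub x y) (mu / L') ltac:(apply Rdiv_lt_0_compat; lra).
rewrite -Hsplit in He.
have Hxy : vsub x y = vadd (vsub x (u k)) (vsub (u k) y) by apply vsub_split.
have He2 := norm_add_eps (vsub x (u k)) (vsub (u k) y) 1 ltac:(lra).
rewrite -Hxy Rinv_1 in He2.
have Hc := center_dist k y hy.
have HdS : vnorm (vsub x (u k)) = dd (S k) by rewrite /dd sub1S.
rewrite HdS -/L' in He2 Hc.
have [a b] := HLs k.
set P := vnorm (vsub z x) ^ 2 in h He.
set Q := vnorm (vsub x y) ^ 2 in He He2.
set Z := vnorm (vsub z y) ^ 2 in h He.
set D1 := dd (S k) in He2 *.
set D0 := dd k in Hc *.
set V := vnorm (vsub (u k) y) ^ 2 in He2 Hc.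
have hP : 0 <= P by apply pow2_ge_0.
have hQ : 0 <= Q by apply pow2_ge_0.
have hD1 : 0 <= D1 ^ 2 by apply pow2_ge_0.
have hD0 : 0 <= D0 ^ 2 by apply pow2_ge_0.
(* F x - F z <= L'/2 Z - (L'+mu)/2 P <= L'/2 (1 + L'/mu) Q *)
have E1 : L' / 2 * Z <= (L' + mu) / 2 * P + L' / 2 * (1 + L' / mu) * Q.
  have -> : L' / 2 * (1 + L' / mu) * Q = L' / 2 * ((1 + / (mu / L')) * Q) by fld.
  have -> : (L' + mu) / 2 * P = L' / 2 * ((1 + mu / L') * P) by fld.
  rewrite -Rmult_plus_distr_l; apply Rmult_le_compat_l; lra.
have E2 : L' * Q <= 2 * L * (D1 ^ 2 + D0 ^ 2).
  have : L' * Q <= 2 * L' * D1 ^ 2 + 2 * (L' * V) by nra.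
  have : L' * D1 ^ 2 <= L * D1 ^ 2 by nra.
  have : Ls k * D0 ^ 2 <= L * D0 ^ 2 by nra.
  lra.
have E3 : L' / 2 * (1 + L' / mu) * Q <= Kc * (D1 ^ 2 + D0 ^ 2).
  have -> : L' / 2 * (1 + L' / mu) * Q = (1 + L' / mu) / 2 * (L' * Q) by fld.
  have hm : 1 + L' / mu <= 1 + L / mu.
    have : L' / mu <= L / mu by rewrite /Rdiv; apply Rmult_le_compat_r; [apply Rlt_le, Rinv_0_lt_compat|]; lra.
    lra.
  have hm00 : 0 <= L' / mu by apply Rdiv_le_0_compat; lra.
  have hm0 : 0 <= 1 + L' / mu by lra.
  have hLQ : 0 <= L' * Q by nra.
  apply: (Rle_trans _ ((1 + L / mu) / 2 * (L' * Q))).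
    rewrite /Rdiv; apply Rmult_le_compat_r; [lra|]. apply Rmult_le_compat_r; lra.
  rewrite /Kc.
  have -> : L * (1 + L / mu) * (D1 ^ 2 + D0 ^ 2) = (1 + L / mu) / 2 * (2 * L * (D1 ^ 2 + D0 ^ 2)) by fld.
  apply Rmult_le_compat_l => //.
  have : 0 <= L / mu by apply Rdiv_le_0_compat; lra.
  lra.
rewrite /F; lra.
Qed.

Lemma dd_ge0 k : 0 <= dd k.
Proof. apply vnorm_ge0. Qed.

Lemma dd0 : dd 0 = 0.
Proof.
rewrite /dd /=.
have -> : vsub (u 0%nat) (u (0 - 1)%nat) = vscale 0 (u 0%nat).
  apply functional_extensionality => i; rewrite /vsub /vscale sub0n; ring.
by rewrite vnorm_scale Rabs_R0 Rmult_0_l.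
Qed.

Lemma geo_tail (D tau : R) : 0 <= D -> 0 < tau < 1 -> (forall k, dd (S k) <= D * tau ^ k) ->
  forall k n, vnorm (vsub (u (k + n)%nat) (u k)) <= D * tau ^ k * (1 - tau ^ n) / (1 - tau).
Proof.
move=> hD ht Hd k n; elim: n => [|n IH].
  rewrite addn0.
  have -> : vsub (u k) (u k) = vscale 0 (u k) by apply functional_extensionality => i; rewrite /vsub /vscale; ring.
  rewrite vnorm_scale Rabs_R0 Rmult_0_l /= Rminus_diag Rmult_0_r /Rdiv Rmult_0_l; lra.
rewrite addnS.
have h1 := vnorm_tri3 (u (S (k + n))) (u (k + n)%nat) (u k).
have h2 := Hd (k + n)%nat.
rewrite /dd sub1S in h2.
have -> : D * tau ^ k * (1 - tau ^ S n) / (1 - tau) = D * tau ^ k * (1 - tau ^ n) / (1 - tau) + D * tau ^ (k + n)%nat.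
  rewrite pow_add /=; fld.
lra.
Qed.

Lemma main_result : exists ustar : vec m,
    is_min_over U (xi_sum xi1 xi2) ustar /\
    (forall v, is_min_over U (xi_sum xi1 xi2) v -> v = ustar) /\
    exists C tau : R, 0 < C /\ 0 < tau < 1 /\
      forall k : nat, vnorm (vsub (u k) ustar) <= C * tau ^ k.
Proof.
have Hlb : forall r, (exists z, (U z /\ dom xi2 z) /\ r = F z) -> F (u 1%nat) - Kc * (dd 1 ^ 2 + dd 0 ^ 2) <= r.
  move=> r [z [[hUz hz] ->]]; have := err 0 z hUz hz; lra.
have [Fs [HF1 HF2]] := inf_exists _ _ (ex_intro _ (F (u 0%nat)) (ex_intro _ (u 0%nat) (conj (dU_all 0) erefl))) Hlb.
have HFs : forall z, U z -> dom xi2 z -> Fs <= F z.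
  by move=> z hUz hz; apply HF1; exists z.
pose a k := Phi k - Fs.
have Ha0 : forall k, 0 <= a k.
  move=> k; have [hU hd] := dU_all k; have := HFs _ hU hd.
  have := pow2_ge_0 (dd k); have [hl _] := HLs k.
  rewrite /a /Phi => h1 h2; have : 0 <= Ls k / 2 * dd k ^ 2 by apply Rmult_le_pos; [lra|].
  lra.
set K2 := Kc + L.
have HLmu : 0 <= L / mu by apply Rdiv_le_0_compat; lra.
have HKc : 0 <= Kc by rewrite /Kc; nra.
have errPhi : forall k, a (S k) <= K2 * (dd (S k) ^ 2 + dd k ^ 2).
  move=> k; rewrite /a.
  apply: (lim_small _ _ 1) => t ht.
  have [r [[z [[hUz hz] ->]] hr]] := HF2 t ltac:(lra).
  have := err k z hUz hz; have [_ hl] := HLs (S k).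
  have := pow2_ge_0 (dd (S k)); have := pow2_ge_0 (dd k).
  rewrite /Phi /K2 => h1 h2 h3.
  have : Ls (S k) / 2 * dd (S k) ^ 2 <= L * dd (S k) ^ 2 by rewrite /Rdiv; nra.
  have : 0 <= L * dd k ^ 2 by nra.
  move=> h4 h5; lra.
set c := 2 * K2 / mu.
have Hc0 : 0 <= c by rewrite /c /K2; apply Rdiv_le_0_compat; lra.
set r := c / (1 + c).
have Hr : 0 <= r < 1.
  rewrite /r; split; first (apply Rdiv_le_0_compat; lra).
  apply (Rmult_lt_reg_r (1 + c)); first lra.
  rewrite /Rdiv Rmult_assoc Rinv_l; lra.
have Hrec : forall j, a (S (S j)) <= r * a j.
  move=> j.
  have h1 := Phi_dec (S j); have h2 := Phi_dec j; have h3 := errPhi (S j).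
  set X := dd (S (S j)) ^ 2 + dd (S j) ^ 2 in h3.
  have hX : mu / 2 * X <= a j - a (S (S j)) by rewrite /a /X; lra.
  have hX0 : 0 <= X by rewrite /X; have := pow2_ge_0 (dd (S (S j))); have := pow2_ge_0 (dd (S j)); lra.
  have h4 : a (S (S j)) <= c * (a j - a (S (S j))).
    apply: (Rle_trans _ _ _ h3).
    have -> : c * (a j - a (S (S j))) = K2 * (2 / mu * (a j - a (S (S j)))) by rewrite /c; fld.
    apply Rmult_le_compat_l; first (rewrite /K2; lra).
    have -> : 2 / mu * (a j - a (S (S j))) = (a j - a (S (S j))) / (mu / 2) by fld.
    apply (Rmult_le_reg_r (mu / 2)); first lra.
    rewrite /Rdiv Rmult_assoc Rinv_l; lra.
  have : a (S (S j)) * (1 + c) <= c * a j by lra.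
  move=> h5; rewrite /r.
  apply (Rmult_le_reg_r (1 + c)); first lra.
  have -> : c / (1 + c) * a j * (1 + c) = c * a j by fld.
  done.
set tau := (3 + r) / 4.
have Htau : 0 < tau < 1 by rewrite /tau; lra.
set sig := tau ^ 2.
have Hsig : 0 < sig <= 1 by rewrite /sig; nra.
have Hrs : r <= sig ^ 2.
  rewrite /sig /tau.
  have : 0 <= (1 - r) / 4 <= 1 by lra.
  set x := (1 - r) / 4.
  have -> : r = 1 - 4 * x by rewrite /x; lra.
  have -> : (3 + (1 - 4 * x)) / 4 = 1 - x by fld.
  move=> hx; nra.
set M := a 0%nat / sig.
have HM : 0 <= M by apply Rdiv_le_0_compat; [apply Ha0 | lra].
have Hdec : forall k, a (S k) <= a k.
  move=> k; have := Phi_dec k; have := pow2_ge_0 (dd (S k)); rewrite /a; nra.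
have Hgeo2 : forall k, a k <= M * sig ^ k /\ a (S k) <= M * sig ^ (S k).
  elim=> [|k [IH1 IH2]].
    have hM : M * sig = a 0%nat by rewrite /M; fld.
    split.
      have : a 0%nat <= M by rewrite -hM; have := Ha0 0%nat; nra.
      by rewrite /= Rmult_1_r.
    by rewrite /= Rmult_1_r hM; apply Hdec.
  split => //.
  have := Hrec k => h.
  have : r * a k <= sig ^ 2 * (M * sig ^ k) by apply Rmult_le_compat; [lra| apply Ha0 |lra|lra].
  have -> : sig ^ 2 * (M * sig ^ k) = M * sig ^ (S (S k)) by rewrite /=; ring.
  lra.
have Hgeo : forall k, a k <= M * sig ^ k by move=> k; case: (Hgeo2 k).
set D := sqrt (2 * M / mu).
have HD : 0 <= D by apply sqrt_pos.
have Hdd : forall k, dd (S k) <= D * tau ^ k.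
  move=> k.
  have h1 := Phi_dec k; have h2 := Ha0 (S k); have h3 := Hgeo k.
  have h4 : dd (S k) ^ 2 <= 2 / mu * (M * sig ^ k).
    have : mu / 2 * dd (S k) ^ 2 <= M * sig ^ k by rewrite /a in h2 h3; lra.
    move=> h; apply (Rmult_le_reg_l (mu / 2)); first lra.
    have -> : mu / 2 * (2 / mu * (M * sig ^ k)) = M * sig ^ k by fld.
    done.
  have h5 : (D * tau ^ k) ^ 2 = 2 / mu * (M * sig ^ k).
    rewrite Rpow_mult_distr /D /= Rmult_1_r sqrt_sqrt; last by apply Rdiv_le_0_compat; lra.
    rewrite /sig -pow_mult Nat.mul_comm pow_mult /=; fld.
  have h6 : 0 <= D * tau ^ k by apply Rmult_le_pos => //; apply pow_le; lra.
  have := dd_ge0 (S k) => h7.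
  nra.
set B := D / (1 - tau).
have HB : 0 <= B by apply Rdiv_le_0_compat; lra.
have Htail : forall k n, vnorm (vsub (u (k + n)%nat) (u k)) <= B * tau ^ k.
  move=> k n; have := geo_tail D tau HD Htau Hdd k n.
  have : 0 <= tau ^ n by apply pow_le; lra.
  have : 0 <= D * tau ^ k by apply Rmult_le_pos => //; apply pow_le; lra.
  move=> h1 h2 h3.
  have : D * tau ^ k * (1 - tau ^ n) / (1 - tau) <= B * tau ^ k.
    have -> : B * tau ^ k = D * tau ^ k * 1 / (1 - tau) by rewrite /B; fld.
    rewrite /Rdiv; apply Rmult_le_compat_r; first (apply Rlt_le, Rinv_0_lt_compat; lra).
    apply Rmult_le_compat_l => //; lra.
  lra.
have Htau_abs : Rabs tau < 1 by rewrite Rabs_right; lra.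
have [ustar Hconv] : exists ustar, vconv u ustar.
  apply vcomplete => e he.
  have [N HN] := pow_lt_1_zero tau Htau_abs (e / (2 * (B + 1))) ltac:(apply Rdiv_lt_0_compat; lra).
  exists N => n k hn hk.
  have hn' : n = (N + (n - N))%nat by rewrite subnKC //; apply/leP.
  have hk' : k = (N + (k - N))%nat by rewrite subnKC //; apply/leP.
  have t1 := Htail N (n - N)%nat; have t2 := Htail N (k - N)%nat.
  rewrite -hn' in t1; rewrite -hk' in t2.
  have t3 := vnorm_tri3 (u n) (u N) (u k).
  rewrite (vnorm_sym (u N) (u k)) in t3.
  have := HN N (le_n N); rewrite Rabs_right; last by apply Rle_ge, pow_le; lra.
  move=> h.
  have hpN : 0 <= tau ^ N by apply pow_le; lra.
  have : B * tau ^ N <= (B + 1) * tau ^ N by nra.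
  have : (B + 1) * tau ^ N < (B + 1) * (e / (2 * (B + 1))) by apply Rmult_lt_compat_l; lra.
  have -> : (B + 1) * (e / (2 * (B + 1))) = e / 2 by fld.
  lra.
have Hrate : forall k, vnorm (vsub (u k) ustar) <= B * tau ^ k.
  move=> k; rewrite vnorm_sym.
  apply: (cv_le_lim _ _ _ k (vconv_norm u ustar (u k) Hconv)).
  move=> n hn.
  have hn' : n = (k + (n - k))%nat by rewrite subnKC //; apply/leP.
  rewrite hn'; apply Htail.
have HFcv : Un_cv (fun n => F (u n)) Fs.
  move=> e he.
  have Hsig_abs : Rabs sig < 1.
    rewrite Rabs_right; last lra.
    rewrite /sig; have := Htau; nra.
  have [N HN] := pow_lt_1_zero sig Hsig_abs (e / (M + 1)) ltac:(apply Rdiv_lt_0_compat; lra).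
  exists N => n hn.
  have [hU hd] := dU_all n.
  have h1 := HFs _ hU hd; have h2 := Hgeo n.
  have [hl _] := HLs n.
  have h3' : 0 <= Ls n / 2 * dd n ^ 2 by apply Rmult_le_pos; [lra | apply pow2_ge_0].
  have h3 : F (u n) <= Phi n by rewrite /Phi; lra.
  have := HN n hn; rewrite Rabs_right; last by apply Rle_ge, pow_le; lra.
  move=> h4.
  have hpn : 0 <= sig ^ n by apply pow_le; lra.
  have : M * sig ^ n <= (M + 1) * sig ^ n by nra.
  have : (M + 1) * sig ^ n < (M + 1) * (e / (M + 1)) by apply Rmult_lt_compat_l; lra.
  have -> : (M + 1) * (e / (M + 1)) = e by fld.
  rewrite /R_dist /a in h2 *; move=> *; apply Rabs_def1; lra.
have Hx1cv := grad_cont xi1 g1 Hg u ustar Hconv.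
have [hdstar hestar] := closed_e xi2 Hcl u (fun n => F (u n) - xi1 (u n)) ustar (Fs - xi1 ustar)
   (fun n => proj2 (dU_all n)) ltac:(move=> n; rewrite /F /Fv; lra) Hconv (CV_minus _ _ _ _ HFcv Hx1cv).
have HUstar : U ustar by apply: (HUcl u) => // n; apply (dU_all n).
have HFstar : F ustar <= Fs by rewrite /F /Fv; lra.
have Hmin : is_min_over U (xi_sum xi1 xi2) ustar.
  split => // z hUz.
  rewrite /xi_sum (ev_dom _ _ hdstar) /=.
  case hz: (xi2 z) => [rz|] //=.
  have hdz : dom xi2 z by rewrite /dom hz.
  have hev : ev xi2 z = rz by rewrite /ev hz.
  have := HFs z hUz hdz; rewrite /F /Fv hev => h1.
  rewrite /F /Fv in HFstar; lra.
exists ustar; split => //; split.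
  move=> v [hUv Hv].
  have := Hv ustar HUstar; rewrite /xi_sum (ev_dom _ _ hdstar).
  case hvv: (xi2 v) => [rv|] //= hle.
  have hdv : dom xi2 v by rewrite /dom hvv.
  have hev : ev xi2 v = rv by rewrite /ev hvv.
  have [hwd hw] := value_sc xi2 Hcl Hcv mu ltac:(lra) Hsc v ustar (1/2) hdv hdstar ltac:(lra).
  have hUw := HUc v ustar (1/2) hUv HUstar ltac:(lra).
  have hx1 := Hx1 v ustar (1/2) ltac:(lra).
  have := Hmin.2 _ hUw; rewrite /xi_sum (ev_dom _ _ hdstar) (ev_dom _ _ hwd) /= => h.
  have hn2 : vnorm (vsub v ustar) ^ 2 <= 0.
    have h0 : mu / 2 * (1 / 2 * (1 - 1 / 2)) * vnorm (vsub v ustar) ^ 2 <= 0 by lra.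
    have : 0 < mu / 2 * (1 / 2 * (1 - 1 / 2)) by lra.
    have := pow2_ge_0 (vnorm (vsub v ustar)); nra.
  apply vnorm_eq0; have := vnorm_ge0 (vsub v ustar); nra.
exists (B + 1), tau; split; first lra; split => // k.
have := Hrate k; have : 0 <= tau ^ k by apply pow_le; lra.
nra.
Qed.
End Main.

Theorem theorem1 (m : nat) (U : vec m -> Prop)
  (xi1 : vec m -> R) (g1 : vec m -> vec m) (xi2 : vec m -> ER) (L mu : R)
  (u ut : nat -> vec m) (Ls omega : nat -> R) :
  vnonempty U -> vclosed_set U -> vconvex_set U ->
  convex_fun xi1 -> is_gradient xi1 g1 -> 0 < L -> lipschitz g1 L ->
  proper_fun xi2 -> closed_fun xi2 -> convex_efun xi2 ->
  0 < mu -> strongly_convex xi2 mu ->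
  U (u 0%nat) -> dom xi2 (u 0%nat) ->
  (forall k, 0 < Ls k <= L) ->
  (forall k, 0 <= omega k <= sqrt (Ls k / Ls (S k))) ->
  (* step k+1: u^{k-1} is read as u (k-1) with u^{-1} = u^0 *)
  (forall k : nat,
     let yhat := vadd (u k) (vscale (omega k) (vsub (u k) (u (k - 1)%nat))) in
     is_min_over U (model xi1 g1 xi2 yhat (Ls (S k))) (ut (S k)) /\
     (ERlt (xi_sum xi1 xi2 (u k)) (xi_sum xi1 xi2 (ut (S k))) ->
        is_min_over U (model xi1 g1 xi2 (u k) (Ls (S k))) (u (S k)) /\
        descent xi1 g1 (u k) (u (S k)) (Ls (S k))) /\
     (~ ERlt (xi_sum xi1 xi2 (u k)) (xi_sum xi1 xi2 (ut (S k))) ->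
        u (S k) = ut (S k) /\
        descent xi1 g1 yhat (u (S k)) (Ls (S k)))) ->
  exists ustar : vec m,
    is_min_over U (xi_sum xi1 xi2) ustar /\
    (forall v, is_min_over U (xi_sum xi1 xi2) v -> v = ustar) /\
    exists C tau : R, 0 < C /\ 0 < tau < 1 /\
      forall k : nat, vnorm (vsub (u k) ustar) <= C * tau ^ k.
Proof.
move=> H1 H2 H3 H4 H5 H6 H7 H8 H9 H10 H11 H12 H13 H14 H15 H16 H17.
exact: (main_result U xi1 g1 xi2 L mu u ut Ls omega H2 H3 H4 H5 H6 H9 H10 H11 H12 H13 H14 H15 H16 H17).
Qed.
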